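(* Let $a_1,b_1,a_2,b_2$ be integers with $a_1a_2(a_1b_2-a_2b_1)\neq 0$, and put $D=a_1b_2-a_2b_1$. (i) Suppose $m_1,m_2,k_1,k_2,l$ are positive integers with $k_1\neq k_2$ such that $$m_1=\frac{k_2D}{a_2(k_2-k_1)},\qquad m_2=\frac{k_1D}{a_1(k_2-k_1)},\qquad k_1\sigma(m_1)=k_2\sigma(m_2),$$ and such that $q_i=k_il-1$ is a prime not dividing $m_i$ for $i=1,2$. If $n=\frac{m_1q_1-b_1}{a_1}$, then $a_1n+b_1=m_1q_1$, $a_2n+b_2=m_2q_2$, and $\sigma(a_1n+b_1)=\sigma(a_2n+b_2)$. (ii) Suppose $m_1,m_2,k_1,k_2,l$ are positive integers with $k_1\neq k_2$ such that $$m_1=\frac{k_2D}{a_2(k_1-k_2)},\qquad m_2=\frac{k_1D}{a_1(k_1-k_2)},\qquad k_1\varphi(m_1)=k_2\varphi(m_2),$$ and such that $q_i=k_il+1$ is a prime not dividing $m_i$ for $i=1,2$. If $n=\frac{m_1q_1-b_1}{a_1}$, then $a_1n+b_1=m_1q_1$, $a_2n+b_2=m_2q_2$, and $\varphi(a_1n+b_1)=\varphi(a_2n+b_2)$. (iii) Moreover, if $a_1=a_2$ and the hypotheses of (ii) hold (the three displayed relations of (ii)), then $m_2=m_1+b_2-b_1$ and $m_1,m_2$ have the same set of prime factors.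
   Context: $\sigma(m)$ denotes the sum of the positive divisors of $m$ and $\varphi$ is Euler's totient function. *)

(* Defs.v *)
From mathcomp Require Import all_boot all_order all_algebra.
Set Implicit Arguments. Unset Strict Implicit. Unset Printing Implicit Defensive.

(* sum of the positive divisors of m; [divisors m] is the sorted list of
   divisors of m > 0 (and [::] for m = 0). *)
Definition sigma (m : nat) : nat := \sum_(d <- divisors m) d.

(* Main.v *)
Set Warnings "-notation-overridden,-ambiguous-paths".
Require Import Defs.
From mathcomp Require Import all_boot all_order all_algebra.
From mathcomp Require Import ring.
Import GRing.Theory Num.Theory.

Lemma sigma_mulp m p : 0 < m -> prime p -> ~~ (p %| m) ->
  sigma (m * p) = sigma m * p.+1.
Proof.
move=> m0 pp npm.
have p0 := prime_gt0 pp.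
have mp0 : 0 < m * p by rewrite muln_gt0 m0.
have Hperm : perm_eq (divisors (m * p)) (divisors m ++ map (muln p) (divisors m)).
  apply: uniq_perm; first exact: divisors_uniq.
    rewrite cat_uniq divisors_uniq map_inj_uniq ?divisors_uniq /=; last first.
      by move=> x y /eqP; rewrite eqn_pmul2l // => /eqP.
    rewrite andbT; apply/hasPn => x /mapP[d Hd ->]; rewrite /= -dvdn_divisors //; apply/negP => H.
    by case/negP: npm; apply: dvdn_trans H; apply: dvdn_mulr.
  move=> x; rewrite mem_cat -!dvdn_divisors //.
  apply/idP/idP.
    move=> H; case pdx: (p %| x).
      case/dvdnP: pdx H => y -> H; apply/orP; right.
      apply/mapP; exists y; last by rewrite mulnC.
      by rewrite -dvdn_divisors //; rewrite dvdn_pmul2r // in H.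
    apply/orP; left.
    have cx : coprime x p by rewrite coprime_sym prime_coprime // pdx.
    by rewrite -(Gauss_dvdl _ cx).
  case/orP => [H|]; first by apply: dvdn_mulr.
  case/mapP => d; rewrite -dvdn_divisors // => Hd ->.
  by rewrite mulnC dvdn_pmul2r.
rewrite /sigma (perm_big _ Hperm) big_cat /= big_map -big_distrr /=.
by rewrite mulnS mulnC addnC.
Qed.
Lemma ndvd_tot P n : prime P -> 0 < n -> (forall p, p \in primes n -> p < P) ->
  ~~ (P %| totient n).
Proof.
move=> PP n0 Hlt; rewrite totientE // Euclid_dvd_prod //.
rewrite big_seq; elim/big_rec: _ => // p b Hp Hb.
rewrite negb_or Hb andbT.
have ltp := Hlt p Hp.
have pp : prime p by move: Hp; rewrite mem_primes => /andP[].
rewrite Euclid_dvdM // Euclid_dvdX // negb_or negb_and; apply/andP; split.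
  apply/negP => /dvdn_leq.
  have p1 : 0 < p.-1 by move: (prime_gt1 pp); case: p {Hp ltp pp} => [|[]].
  move=> /(_ p1) H; move: ltp; rewrite ltnNge; apply/negP; apply/negPn.
  by apply: leq_trans H (leq_pred _).
apply/orP; left; apply/negP => /dvdn_leq; rewrite prime_gt0 // => /(_ isT) H.
by move: ltp; rewrite ltnNge H.
Qed.

Lemma pred_ndvd p : 1 < p -> ~~ (p %| p.-1).
Proof.
case: p => [|[|n]] // _; apply/negP => /dvdn_leq.
by rewrite /= ltnn; move/(_ isT).

Qed.

Lemma predD e f : 0 < e -> 0 < f -> e.-1 + f = e + f.-1.
Proof. by case: e => // e; case: f => // f _ _; rewrite /= addnS addSn. Qed.

Lemma primes_split m' P e p : prime P -> 0 < e -> 0 < m' ->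
  (p \in primes (m' * P ^ e)) = (p == P) || (p \in primes m').
Proof.
move=> PP e0 m0; rewrite primesM //; last by rewrite expn_gt0 prime_gt0.
rewrite (primesX P e0) (primes_prime PP).
by rewrite inE orbC.
Qed.

Lemma key k : forall m1 m2, m1 + m2 < k -> 0 < m1 -> 0 < m2 ->
  m2 * totient m1 = m1 * totient m2 -> primes m1 =i primes m2.
Proof.
elim: k => // k IH m1 m2.
wlog h : m1 m2 / max_pdiv m2 <= max_pdiv m1.
  move=> W lt m10 m20 E; case: (leqP (max_pdiv m2) (max_pdiv m1)) => H.
    exact: W.
  move=> p; symmetry; apply: W => //; first exact: ltnW.
  by rewrite addnC.
move=> lt m10 m20 E.
case: (ltngtP m1 1) => [|m11|m11]; first by rewrite ltnS leqn0 => /eqP m1e; rewrite m1e in m10.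
2: { subst m1. case: (ltngtP m2 1) => [|m21|->//]; first by rewrite ltnS leqn0 => /eqP m2e; rewrite m2e in m20.
     have := max_pdiv_prime m21 => /prime_gt1; rewrite ltnNge.
     have M1 : max_pdiv 1 = 1 by []. by rewrite M1 in h; rewrite h. }
set P := max_pdiv m1.
have PP : prime P by exact: max_pdiv_prime.
have P1 := prime_gt1 PP.
have P0 := prime_gt0 PP.
have Pm1 : P %| m1 := max_pdiv_dvd m1.
have bnd1 p : p \in primes m1 -> p <= P by exact: max_pdiv_max.
have bnd2 p : p \in primes m2 -> p <= P.
  by move=> Hp; apply: leq_trans h; exact: max_pdiv_max.
have [m1' c1 d1] := pfactor_coprime PP m10.
have [m2' c2 d2] := pfactor_coprime PP m20.
set e := logn P m1 in d1; set f := logn P m2 in d2.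
have e0 : 0 < e by rewrite /e logn_gt0 mem_primes PP m10 Pm1.
have m1'0 : 0 < m1' by move: m10; rewrite d1 muln_gt0 => /andP[].
have m2'0 : 0 < m2' by move: m20; rewrite d2 muln_gt0 => /andP[].
have lt1 p : p \in primes m1' -> p < P.
  move=> Hp; rewrite ltn_neqAle; apply/andP; split.
    apply/eqP => pe; move: Hp; rewrite pe mem_primes => /and3P[_ _].
    by apply/negP; rewrite -prime_coprime.
  apply: bnd1; move: Hp; rewrite !mem_primes => /and3P[-> _ H]; rewrite m10 /=.
  by rewrite d1 dvdn_mulr.
have lt2 p : p \in primes m2' -> p < P.
  move=> Hp; rewrite ltn_neqAle; apply/andP; split.
    apply/eqP => pe; move: Hp; rewrite pe mem_primes => /and3P[_ _].
    by apply/negP; rewrite -prime_coprime.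
  apply: bnd2; move: Hp; rewrite !mem_primes => /and3P[-> _ H]; rewrite m20 /=.
  by rewrite d2 dvdn_mulr.
have t1 : totient m1 = totient m1' * (P.-1 * P ^ e.-1).
  by rewrite d1 totient_coprime ?totient_pfactor // coprime_sym coprimeXl.
have nt1 := @ndvd_tot _ _ PP m1'0 lt1.
have nt2 := @ndvd_tot _ _ PP m2'0 lt2.
have nP1 : ~~ (P %| P.-1).
  exact: pred_ndvd.
have nm2' : ~~ (P %| m2') by rewrite -prime_coprime.
have f0 : 0 < f.
  rewrite lt0n; apply/negP => /eqP f0.
  move: E; rewrite t1 d2 f0 expn0 muln1 d1 => E.
  have : P ^ e %| m2' * (totient m1' * (P.-1 * P ^ e.-1)).
    by rewrite E -mulnA mulnCA dvdn_mulr.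
  rewrite mulnA mulnA Gauss_dvdr; last first.
    apply: coprimeXl; rewrite prime_coprime // !Euclid_dvdM //.
    rewrite (negbTE nm2') (negbTE nt1) (negbTE nP1) //=.
  move/dvdn_leq; rewrite expn_gt0 P0 => /(_ isT).
  by rewrite leq_exp2l // leqNgt -{2}(prednK e0) ltnSn.
have t2 : totient m2 = totient m2' * (P.-1 * P ^ f.-1).
  by rewrite d2 totient_coprime ?totient_pfactor // coprime_sym coprimeXl.
have E' : m2' * totient m1' = m1' * totient m2'.
  move: E; rewrite t1 t2 d1 d2.
  have -> : m2' * P ^ f * (totient m1' * (P.-1 * P ^ e.-1)) =
     (m2' * totient m1') * (P.-1 * P ^ (e.-1 + f)) by rewrite expnD; ring.
  have -> : m1' * P ^ e * (totient m2' * (P.-1 * P ^ f.-1)) =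
     (m1' * totient m2') * (P.-1 * P ^ (e.-1 + f)).
    have ef : e.-1 + f = e + f.-1 by exact: predD.
    by rewrite ef expnD; ring.
  move/eqP; rewrite eqn_pmul2r; first by move/eqP.
  by rewrite muln_gt0 expn_gt0 P0 andbT -subn1 subn_gt0.
have lt' : m1' + m2' < k.
  rewrite -ltnS; apply: leq_trans lt; rewrite ltnS -addSn leq_add //.
    rewrite d1 -{1}(muln1 m1') ltn_pmul2l // -(expn0 P) ltn_exp2l //.
  by rewrite d2 leq_pmulr // expn_gt0 P0.
have IH' := IH _ _ lt' m1'0 m2'0 E'.
move=> p; rewrite d1 d2 !primes_split //.
by rewrite IH'.
Qed.

Local Open Scope ring_scope.

Theorem theorem1p1 (a1 b1 a2 b2 : int) :
  let D : rat := (a1 * b2 - a2 * b1)%:~R in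
  a1 * a2 * (a1 * b2 - a2 * b1) != 0 ->
  (* (i) *)
  (forall m1 m2 k1 k2 l : nat,
     (0 < m1)%N -> (0 < m2)%N -> (0 < k1)%N -> (0 < k2)%N -> (0 < l)%N ->
     k1 <> k2 ->
     (m1%:R : rat) = k2%:R * D / (a2%:~R * (k2%:R - k1%:R)) ->
     (m2%:R : rat) = k1%:R * D / (a1%:~R * (k2%:R - k1%:R)) ->
     (k1 * sigma m1 = k2 * sigma m2)%N ->
     let q1 := (k1 * l).-1 in let q2 := (k2 * l).-1 in
     prime q1 -> ~~ (q1 %| m1)%N -> prime q2 -> ~~ (q2 %| m2)%N ->
     let n : rat := ((m1 * q1)%:R - b1%:~R) / a1%:~R in
     [/\ a1%:~R * n + b1%:~R = (m1 * q1)%:R,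
         a2%:~R * n + b2%:~R = (m2 * q2)%:R
       & sigma (m1 * q1) = sigma (m2 * q2)]) /\
  (* (ii) *)
  (forall m1 m2 k1 k2 l : nat,
     (0 < m1)%N -> (0 < m2)%N -> (0 < k1)%N -> (0 < k2)%N -> (0 < l)%N ->
     k1 <> k2 ->
     (m1%:R : rat) = k2%:R * D / (a2%:~R * (k1%:R - k2%:R)) ->
     (m2%:R : rat) = k1%:R * D / (a1%:~R * (k1%:R - k2%:R)) ->
     (k1 * totient m1 = k2 * totient m2)%N ->
     let q1 := (k1 * l).+1 in let q2 := (k2 * l).+1 in
     prime q1 -> ~~ (q1 %| m1)%N -> prime q2 -> ~~ (q2 %| m2)%N ->
     let n : rat := ((m1 * q1)%:R - b1%:~R) / a1%:~R in
     [/\ a1%:~R * n + b1%:~R = (m1 * q1)%:R,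
         a2%:~R * n + b2%:~R = (m2 * q2)%:R
       & totient (m1 * q1) = totient (m2 * q2)]) /\
  (* (iii) *)
  (a1 = a2 ->
   forall m1 m2 k1 k2 : nat,
     (0 < m1)%N -> (0 < m2)%N -> (0 < k1)%N -> (0 < k2)%N ->
     k1 <> k2 ->
     (m1%:R : rat) = k2%:R * D / (a2%:~R * (k1%:R - k2%:R)) ->
     (m2%:R : rat) = k1%:R * D / (a1%:~R * (k1%:R - k2%:R)) ->
     (k1 * totient m1 = k2 * totient m2)%N ->
     m2%:Z = m1%:Z + b2 - b1 /\ primes m1 = primes m2).
Proof.
move=> D H.
move: H; rewrite !mulf_eq0 !negb_or => /andP[/andP[a10 a20] d0].
have A1 : (a1%:~R : rat) != 0 by rewrite intr_eq0.
have A2 : (a2%:~R : rat) != 0 by rewrite intr_eq0.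
have DE : D = a1%:~R * b2%:~R - a2%:~R * b1%:~R by rewrite /D rmorphB /= !rmorphM.
split; [|split].
- move=> m1 m2 k1 k2 l m10 m20 k10 k20 l0 k12 Hm1 Hm2 Hs q1 q2 pq1 nq1 pq2 nq2 n.
  have kl1 : (0 < k1 * l)%N by rewrite muln_gt0 k10.
  have kl2 : (0 < k2 * l)%N by rewrite muln_gt0 k20.
  have K12 : (k2%:R - k1%:R : rat) != 0.
    by rewrite subr_eq0 eqr_nat; apply/eqP => E; exact: k12 (esym E).
  have Q1 : (q1%:R : rat) = k1%:R * l%:R - 1 by rewrite /q1 -subn1 natrB // natrM.
  have Q2 : (q2%:R : rat) = k2%:R * l%:R - 1 by rewrite /q2 -subn1 natrB // natrM.
  split.
  + by rewrite /n mulrCA mulfV // mulr1 subrK.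
  + rewrite /n !natrM Q1 Q2 Hm1 Hm2 DE; field.
    by rewrite A1 A2 K12.
  + rewrite /q1 /q2 !sigma_mulp // prednK // prednK //.
    by rewrite !mulnA (mulnC (sigma m1)) (mulnC (sigma m2)) Hs.
- move=> m1 m2 k1 k2 l m10 m20 k10 k20 l0 k12 Hm1 Hm2 Hs q1 q2 pq1 nq1 pq2 nq2 n.
  have K12 : (k1%:R - k2%:R : rat) != 0.
    by rewrite subr_eq0 eqr_nat; apply/eqP => E; exact: k12 E.
  have Q1 : (q1%:R : rat) = k1%:R * l%:R + 1 by rewrite /q1 -natr1 natrM.
  have Q2 : (q2%:R : rat) = k2%:R * l%:R + 1 by rewrite /q2 -natr1 natrM.
  split.
  + by rewrite /n mulrCA mulfV // mulr1 subrK.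
  + rewrite /n !natrM Q1 Q2 Hm1 Hm2 DE; field.
    by rewrite A1 A2 K12.
  + rewrite totient_coprime; last by rewrite coprime_sym prime_coprime.
    rewrite totient_coprime; last by rewrite coprime_sym prime_coprime.
    rewrite (totient_prime pq1) (totient_prime pq2) /q1 /q2 /=.
    by rewrite !mulnA (mulnC (totient m1)) (mulnC (totient m2)) Hs.
- move=> Ea m1 m2 k1 k2 m10 m20 k10 k20 k12 Hm1 Hm2 Ht.
  have K12 : (k1%:R - k2%:R : rat) != 0.
    by rewrite subr_eq0 eqr_nat; apply/eqP => E; exact: k12 E.
  rewrite -Ea in Hm1.
  have ER : (m2%:R : rat) = m1%:R + b2%:~R - b1%:~R.
    rewrite Hm1 Hm2 DE -Ea; field.
    by rewrite A1 K12.
  split.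
    apply: (@intr_inj rat); rewrite !rmorphB !rmorphD /=.
    exact: ER.
  have Km : (k1 * m1 = k2 * m2)%N.
    apply/eqP; rewrite -(eqr_nat rat) !natrM Hm1 Hm2; apply/eqP; field.
    by rewrite A1 K12.
  have kk : (0 < k1 * k2)%N by rewrite muln_gt0 k10.
  have X : (k1 * k2 * (m2 * totient m1) = k1 * k2 * (m1 * totient m2))%N.
    transitivity ((k2 * m2) * (k1 * totient m1))%N; first ring.
    rewrite -Km Ht; ring.
  have E2 : (m2 * totient m1 = m1 * totient m2)%N.
    by apply/eqP; rewrite -(eqn_pmul2l kk) X.
  apply: (irr_sorted_eq ltn_trans ltnn (sorted_primes _) (sorted_primes _)).
  exact: (@key (m1 + m2).+1 m1 m2 (ltnSn _) m10 m20 E2).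
Qed.
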